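(* If the bornological \(V\)-module \(M\) is torsionfree, then so is \(M'\).
   Context: Let \(V\) be a complete discrete valuation ring with uniformiser \(\pi\). A bornology on a set is a collection of subsets (called bounded) containing all finite subsets and closed under finite unions and under taking subsets. A bornological \(V\)-module is a \(V\)-module \(M\) with a bornology such that every bounded subset is contained in a bounded \(V\)-submodule. \(M\) is (bornologically) torsionfree if it is torsionfree as a \(V\)-module and \(\pi^{-1}S=\{x\in M:\pi x\in S\}\) is bounded for every bounded \(S\subseteq M\). A subset \(S\subseteq M\) is compactoid if there is a bounded \(V\)-submodule \(T\subseteq M\) with \(S\subseteq T\) such that for every \(n\in\mathbb N\) there is a finite set \(F_n\subseteq T\) with \(S\subseteq VF_n+\pi^nT\). \(M'\) denotes \(M\) with the bornology consisting of the compactoid subsets. *)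

(* Defs.v *)
From HB Require Import structures.
From Stdlib Require List.
From mathcomp Require Import all_boot all_order all_algebra.
Set Implicit Arguments. Unset Strict Implicit. Unset Printing Implicit Defensive.
Import GRing.Theory.
Local Open Scope ring_scope.

Definition subset_of (T : Type) (A C : T -> Prop) : Prop := forall x, A x -> C x.

Definition finite_subset (T : Type) (A : T -> Prop) : Prop :=
  exists s : seq T, forall x, A x -> List.In x s.

Definition pi_dvd (V : idomainType) (pi : V) (n : nat) (a : V) : Prop :=
  exists b : V, a = pi ^+ n * b.

Definition dvr_uniformiser (V : idomainType) (pi : V) : Prop :=
  [/\ pi != 0, pi \isn't a GRing.unit &
      forall a : V, a != 0 -> exists (u : V) (n : nat), u \is a GRing.unit /\ a = u * pi ^+ n].

Definition pi_adically_complete (V : idomainType) (pi : V) : Prop :=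
  forall x : nat -> V, (forall n, pi_dvd pi n (x n.+1 - x n)) ->
    exists l : V, forall n, pi_dvd pi n (l - x n).

Definition complete_dvr (V : idomainType) (pi : V) : Prop :=
  dvr_uniformiser pi /\ pi_adically_complete pi.

Definition is_bornology (T : Type) (B : (T -> Prop) -> Prop) : Prop :=
  [/\ forall A, finite_subset A -> B A,
      forall A C, B A -> B C -> B (fun x => A x \/ C x) &
      forall A C, subset_of A C -> B C -> B A].

Section Modules.
Variables (V : idomainType) (M : lmodType V).

Definition is_submodule (T : M -> Prop) : Prop :=
  [/\ T 0, forall x y, T x -> T y -> T (x + y) & forall (a : V) x, T x -> T (a *: x)].

Definition bornological_module (B : (M -> Prop) -> Prop) : Prop :=
  is_bornology B /\
  forall S, B S -> exists T, [/\ B T, is_submodule T & subset_of S T].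

Definition pi_inv (pi : V) (S : M -> Prop) : M -> Prop := fun x => S (pi *: x).

Definition torsionfree (pi : V) (B : (M -> Prop) -> Prop) : Prop :=
  (forall (a : V) (x : M), a != 0 -> a *: x = 0 -> x = 0) /\
  (forall S, B S -> B (pi_inv pi S)).

Definition span_of (F : seq M) : M -> Prop :=
  fun x => exists a : 'I_(size F) -> V, x = \sum_(i < size F) a i *: F`_i.

Definition compactoid (pi : V) (B : (M -> Prop) -> Prop) (S : M -> Prop) : Prop :=
  exists T : M -> Prop, [/\ B T, is_submodule T, subset_of S T &
    forall n : nat, exists F : seq M,
      (forall f, List.In f F -> T f) /\
      subset_of S (fun x => exists v t, [/\ span_of F v, T t & x = v + pi ^+ n *: t])].

(* M' : the bornology of compactoid subsets *)
Definition compactoid_bornology (pi : V) (B : (M -> Prop) -> Prop) : (M -> Prop) -> Prop :=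
  compactoid pi B.

End Modules.

(* Main.v *)
Require Import Defs.
From mathcomp Require Import all_boot all_order all_algebra.
From Stdlib Require Import Classical.
Set Implicit Arguments. Unset Strict Implicit. Unset Printing Implicit Defensive.
Import GRing.Theory.
Local Open Scope ring_scope.

Section Aux.
Variables (V : idomainType) (M : lmodType V).

Fixpoint span_rec (F : seq M) (x : M) : Prop :=
  match F with
  | [::] => x = 0
  | f :: F0 => exists a y, span_rec F0 y /\ x = a *: f + y
  end.

Lemma span_rec0 F : span_rec F 0.
Proof. elim: F => [|f F IH] //=; exists 0, 0; split => //; by rewrite scale0r addr0. Qed.

Lemma span_recD F x y : span_rec F x -> span_rec F y -> span_rec F (x + y).
Proof.
elim: F x y => [|f F IH] x y /=; first by move=> -> ->; rewrite addr0.
move=> [a [x0 [h1 ->]]] [b [y0 [h2 ->]]].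
exists (a + b), (x0 + y0); split; first exact: IH.
by rewrite scalerDl addrACA.
Qed.

Lemma span_recZ F c x : span_rec F x -> span_rec F (c *: x).
Proof.
elim: F x => [|f F IH] x /=; first by move=> ->; rewrite scaler0.
move=> [a [x0 [h1 ->]]]; exists (c * a), (c *: x0); split; first exact: IH.
by rewrite scalerDr scalerA.
Qed.

Lemma span_recN F x : span_rec F x -> span_rec F (- x).
Proof. by move=> h; rewrite -scaleN1r; apply: span_recZ. Qed.

Lemma span_recB F x y : span_rec F x -> span_rec F y -> span_rec F (x - y).
Proof. by move=> h1 h2; apply: span_recD => //; apply: span_recN. Qed.

Lemma span_rec_cons f F x : span_rec F x -> span_rec (f :: F) x.
Proof. by move=> h; exists 0, x; split => //; rewrite scale0r add0r. Qed.

Lemma span_rec_cat H F v w : span_rec H v -> span_rec F w -> span_rec (H ++ F) (v + w).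
Proof.
elim: H v => [|h H IH] v /=; first by move=> -> hw; rewrite add0r.
move=> [a [y [hy ->]]] hw; exists a, (y + w); split; first exact: IH.
by rewrite addrA.
Qed.

Lemma span_rec_sub (T : M -> Prop) F x : is_submodule T ->
  (forall f, List.In f F -> T f) -> span_rec F x -> T x.
Proof.
case=> T0 TD TZ; elim: F x => [|f F IH] x /= hF; first by move=> ->.
move=> [a [y [hy ->]]]; apply: TD; first by apply: TZ; apply: hF; left.
by apply: IH => // g hg; apply: hF; right.
Qed.

Lemma span_of_rec F x : span_of F x -> span_rec F x.
Proof.
elim: F x => [|f F IH] x [a ->] /=; first by rewrite big_ord0.
rewrite big_ord_recl /=; exists (a ord0), (\sum_(i < size F) a (lift ord0 i) *: F`_i).
split => //; apply: IH; by exists (fun i => a (lift ord0 i)).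
Qed.

Lemma span_rec_of F x : span_rec F x -> span_of F x.
Proof.
elim: F x => [|f F IH] x /=; first by move=> ->; exists (fun _ => 0); rewrite big_ord0.
move=> [a0 [y [/IH [b ->] ->]]].
exists (fun i : 'I_(size F).+1 => match unlift ord0 i with None => a0 | Some j => b j end).
rewrite big_ord_recl /= unlift_none; congr (_ + _).
by apply: eq_bigr => i _; rewrite liftK.
Qed.

Lemma helper1 (x y z : M) : x + y - z - x = y - z.
Proof. by rewrite addrAC (addrC x) addrK. Qed.

Variable pi : V.
Hypothesis hpi : dvr_uniformiser pi.
Hypothesis htf : forall (a : V) (x : M), a != 0 -> a *: x = 0 -> x = 0.

Lemma nonunit_dvd a : a \isn't a GRing.unit -> exists b, a = pi * b.
Proof.
case: hpi => _ _ hd ha.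
have [->|a0] := eqVneq a 0; first by exists 0; rewrite mulr0.
have [u [n [hu ea]]] := hd a a0.
case: n ea => [|m] ea.
  by move: ha; rewrite ea expr0 mulr1 hu.
by exists (u * pi ^+ m); rewrite ea exprS mulrCA.
Qed.

Lemma key F : exists H : seq M,
  (forall h, List.In h H -> span_rec F (pi *: h)) /\
  forall z, span_rec F (pi *: z) ->
    exists v w, [/\ span_rec H v, span_rec F w & z = v + w].
Proof.
have pi0 : pi != 0 by case: hpi.
elim: F => [|f F [H0 [hH0 IH]]].
  exists [::]; split => // z /= hz; exists 0, 0; split => //.
  by rewrite addr0; apply: htf hz.
case: (classic (exists a0 w0 h0, [/\ a0 \is a GRing.unit, span_rec F w0 &
                  pi *: h0 = a0 *: f + w0])).
  move=> [a0 [w0 [h0 [ua0 hw0 eh0]]]].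
  exists (h0 :: H0); split.
    move=> h /= [<-|hh]; first by exists a0, w0.
    by apply: span_rec_cons; apply: hH0.
  move=> z /= [a [w [hw ez]]].
  pose l := a / a0.
  have e1 : pi *: (z - l *: h0) = w - l *: w0.
    rewrite scalerBr ez scalerA mulrC -scalerA eh0 scalerDr scalerA /l divrK //.
    by rewrite opprD addrA [a *: f + w]addrC addrK.
  have := IH (z - l *: h0); rewrite e1 => /(_ (span_recB hw (span_recZ l hw0))).
  move=> [v [w' [hv hw' e2]]].
  exists (l *: h0 + v), w'; split.
  - by exists l, v.
  - exact: span_rec_cons.
  - by rewrite -addrA -e2 addrC subrK.
move=> hno; exists H0; split.
  by move=> h hh; apply: span_rec_cons; apply: hH0.
move=> z /= [a [w [hw ez]]].
have : a \isn't a GRing.unit.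
  apply/negP => ua; apply: hno; exists a, w, z; split => //.
move=> /nonunit_dvd [b eb].
have e1 : pi *: (z - b *: f) = w.
  by rewrite scalerBr ez scalerA -eb addrC addKr.
have := IH (z - b *: f); rewrite e1 => /(_ hw) [v [w' [hv hw' e2]]].
exists v, (b *: f + w'); split => //; first by exists b, w'.
by rewrite addrCA -e2 addrC subrK.
Qed.

End Aux.

Theorem lemma4p2 (V : idomainType) (pi : V) (hV : complete_dvr pi)
  (M : lmodType V) (B : (M -> Prop) -> Prop)
  (hB : bornological_module B) (htf : torsionfree pi B) :
  torsionfree pi (compactoid_bornology pi B).
Proof.
case: htf => htf1 htf2; case: hV => hpi _.
split => // S [T [BT subT hST happ]].
have subT' := subT; case: subT' => T0 TD TZ.
exists (Defs.pi_inv pi T); split.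
- exact: htf2.
- split; rewrite /Defs.pi_inv.
  + by rewrite scaler0.
  + by move=> x y hx hy; rewrite scalerDr; apply: TD.
  + by move=> a x hx; rewrite scalerA mulrC -scalerA; apply: TZ.
- by move=> x hx; apply: hST.
move=> n; have [F [hF hSF]] := happ n.+1.
have [H [hH hkey]] := key hpi htf1 F.
exists (H ++ F); split.
  move=> f; rewrite List.in_app_iff => -[hf|hf]; rewrite /Defs.pi_inv.
    exact: (span_rec_sub subT hF (hH f hf)).
  by apply: TZ; apply: hF.
move=> x hx; have [v [t [hv ht ex]]] := hSF _ hx.
have e1 : pi *: (x - pi ^+ n *: t) = v.
  by rewrite scalerBr ex scalerA -exprS addrK.
have := hkey (x - pi ^+ n *: t); rewrite e1 => /(_ (span_of_rec hv)).
move=> [v1 [w1 [hv1 hw1 e2]]].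
exists (v1 + w1), t; split.
- by apply: span_rec_of; apply: span_rec_cat.
- by rewrite /Defs.pi_inv; apply: TZ.
- by rewrite -e2 subrK.
Qed.
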